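(* Let $G=(V,E)$ be a finite trivalent graph (for example, a honeycomb lattice with periodic boundary conditions), with a fixed orientation chosen on each edge, and let $L$ be a finite set of string labels with an involution $i\mapsto i^*$. The Hilbert space is $\bigotimes_{e\in E}\mathbb{C}^{L}$, with orthonormal basis $\{|s\rangle\}$ indexed by configurations $s:E\to L$. Let $\mathcal{B}\subseteq L^3$ be a set of allowed triples (branching rules), and call a configuration $s$ valid if at every vertex $v$ the triple of labels on the three edges incident to $v$ (each label replaced by its dual if the corresponding edge is oriented away from $v$) belongs to $\mathcal{B}$; let $S$ be the set of valid configurations. Assume the string-net is Abelian in the sense that the branching rules have no multiplicity: at every vertex, once the (appropriately dualized) labels on two of the three incident edges are fixed, there is at most one label on the third edge making the triple allowed. Let $|\Phi\rangle=\sum_{s\in S}a(s)|s\rangle$ be the string-net ground state (a normalized state supported only on valid configurations). Let $A\subseteq E$ be a non-empty set of edges that is non-loopy, i.e. the subgraph of $G$ formed by the edges of $A$ contains no cycle, and suppose $B=E\setminus A$ is its complement. Then the reduced density matrix $\rho_A=\mathrm{Tr}_B|\Phi\rangle\langle\Phi|$ is fully separable (with respect to the partition of $A$ into its individual edges), i.e. $\rho_A$ contains no entanglement whatsoever.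
   Context: Matrix elements of the reduced state are $[\rho_A]_{s_A,s_A'}=\sum_{s_B}a(s_A s_B)\,a^*(s_A' s_B)$, where the sum is over configurations $s_B$ of the edges in $B$ with both $(s_A,s_B)\in S$ and $(s_A',s_B)\in S$. A density matrix on $\bigotimes_{e\in A}\mathcal{H}_e$ is fully separable if it is a convex combination of product states $\bigotimes_{e\in A}|\psi_e\rangle\langle\psi_e|$. In the Levin–Wen string-net construction, the fixed-point ground state is determined by tensors $F^{ijm}_{kln}$ and $d_i$ and is supported exactly on configurations satisfying the branching rules at every vertex; only this support property is relevant here. *)

(* Defs.v *)
From HB Require Import structures.
From mathcomp Require Import all_boot all_order all_algebra.
Set Implicit Arguments. Unset Strict Implicit. Unset Printing Implicit Defensive.
Import Order.TTheory GRing.Theory Num.Theory.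

Section Graph.
Variables (V E : finType) (src tgt : E -> V).

Definition incident (v : V) (e : E) : bool := (src e == v) || (tgt e == v).

Definition links (e : E) (u w : V) : bool :=
  ((src e == u) && (tgt e == w)) || ((src e == w) && (tgt e == u)).

(* finite trivalent graph (no self-loops; multi-edges allowed) *)
Definition trivalent (nb : V -> 'I_3 -> E) : Prop :=
  [/\ forall e, src e != tgt e,
      forall v, injective (nb v) &
      forall v e, incident v e <-> exists i, nb v i = e].

Definition has_cycle (A : {set E}) : Prop :=
  exists (es : seq E) (vs : seq V),
    [/\ (0 < size es)%N, size vs = size es, uniq es && uniq vs,
        all (fun e => e \in A) es &
        forall (e0 : E) (v0 : V) (i : nat), (i < size es)%N ->
          links (nth e0 es i) (nth v0 vs i) (nth v0 vs ((i.+1) %% size es))].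

Definition non_loopy (A : {set E}) : Prop := ~ has_cycle A.

Variables (L : finType) (dual : L -> L).

Definition vlabel (s : {ffun E -> L}) (v : V) (e : E) : L :=
  if tgt e == v then s e else dual (s e).

Definition i0 : 'I_3 := @Ordinal 3 0 isT.
Definition i1 : 'I_3 := @Ordinal 3 1 isT.
Definition i2 : 'I_3 := @Ordinal 3 2 isT.

Definition valid (nb : V -> 'I_3 -> E) (Br : {set L * L * L})
    (s : {ffun E -> L}) : bool :=
  [forall v, (vlabel s v (nb v i0), vlabel s v (nb v i1), vlabel s v (nb v i2))
               \in Br].

End Graph.

Definition abelian_rules (L : finType) (Br : {set L * L * L}) : Prop :=
  forall x1 x2 x3 y1 y2 y3, (x1, x2, x3) \in Br -> (y1, y2, y3) \in Br ->
    [/\ x1 = y1 -> x2 = y2 -> x3 = y3,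
        x1 = y1 -> x3 = y3 -> x2 = y2 &
        x2 = y2 -> x3 = y3 -> x1 = y1].

Local Open Scope ring_scope.

Section Density.
Variables (E L : finType) (C : numClosedFieldType).

Definition cfgA (A : {set E}) := {ffun {e : E | e \in A} -> L}.
Definition cfgB (A : {set E}) := {ffun {e : E | e \notin A} -> L}.

Definition glue (A : {set E}) (sA : cfgA A) (sB : cfgB A) : {ffun E -> L} :=
  [ffun e => (if e \in A as b return (e \in A) = b -> L
              then fun h => sA (exist _ e h)
              else fun h => sB (exist _ e (negbT h))) erefl].

(* rho_A = Tr_B |Phi><Phi|, with |Phi> = sum_s a(s) |s> *)
Definition rhoA (a : {ffun E -> L} -> C) (A : {set E}) (sA sA' : cfgA A) : C :=
  \sum_(sB : cfgB A) a (glue sA sB) * (a (glue sA' sB))^*.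

(* full separability w.r.t. the tensor factors indexed by I:
   a finite convex combination of product states of normalized pure states *)
Definition fully_separable (I : finType)
    (rho : {ffun I -> L} -> {ffun I -> L} -> C) : Prop :=
  exists (n : nat) (p : 'I_n -> C) (psi : 'I_n -> I -> L -> C),
    [/\ forall k, 0 <= p k,
        \sum_k p k = 1,
        forall k i, \sum_l `|psi k i l| ^+ 2 = 1 &
        forall x y, rho x y =
          \sum_k p k * \prod_i (psi k i (x i) * (psi k i (y i))^*)].

End Density.
Arguments rhoA {E L C} a A sA sA'.
Arguments fully_separable {L C I} rho.

(* Main.v *)
Require Import Defs.
From HB Require Import structures.
From mathcomp Require Import all_boot all_order all_algebra zify.
Import Order.TTheory GRing.Theory Num.Theory.
Set Implicit Arguments. Unset Strict Implicit. Unset Printing Implicit Defensive.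
Section GraphLemma.
Variables (V E : finType) (src tgt : E -> V).
Hypothesis noloop : forall e, src e != tgt e.
Variable D : {set E}.
Hypothesis deg : forall v e, e \in D -> incident src tgt v e ->
  exists2 e', e' \in D & (e' != e) && incident src tgt v e'.

Definition ispath (es : seq E) (vs : seq V) :=
  [/\ size vs = (size es).+1, uniq es, uniq vs, all (fun e => e \in D) es &
      forall e0 v0 i, (i < size es)%N ->
        links src tgt (nth e0 es i) (nth v0 vs i) (nth v0 vs i.+1)].

Lemma links_sym e u w : links src tgt e u w = links src tgt e w u.
Proof. by rewrite /links orbC. Qed.

Lemma extend es vs : ispath es vs -> (0 < size es)%N ->
  has_cycle src tgt D \/ exists e' w, ispath (e' :: es) (w :: vs).
Proof.
case=> Hsz Hues Huvs HD Hl Hpos.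
case: es Hsz Hues HD Hl Hpos => [//|e0 es'] Hsz Hues HD Hl _.
case: vs Hsz Huvs Hl => [//|v0 vs'] Hsz Huvs Hl.
have L0 := Hl e0 v0 0 isT; rewrite /= in L0.
have inc0 : incident src tgt v0 e0.
  by move: L0; rewrite /links /incident => /orP[/andP[->]|/andP[_ ->]]; rewrite ?orbT.
have e0D : e0 \in D by move: HD => /= /andP[].
have [e' e'D /andP[ne' inc']] := deg e0D inc0.
set w := if src e' == v0 then tgt e' else src e'.
have Lw : links src tgt e' w v0.
  rewrite /w /links; move: inc'; rewrite /incident.
  case: (src e' =P v0) => [->|ne] /=; first by rewrite !eqxx orbT.
  by move=> /eqP ->; rewrite !eqxx.
have wv0 : w != v0.
  apply/eqP=> E0; move: Lw; rewrite E0 /links => /orP[]/andP[/eqP h1 /eqP h2];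
  by move: (noloop e'); rewrite h1 h2 eqxx.
have e'es : e' \notin e0 :: es'.
  apply/negP=> /(nthP e0) [i Hi Ei].
  have Li := Hl e0 v0 i Hi; rewrite Ei in Li.
  have Hi1 : (i.+1 < size (v0 :: vs'))%N by rewrite Hsz.
  have Hi0 : (i < size (v0 :: vs'))%N by rewrite Hsz; apply: ltnW.
  have H0 : (0 < size (v0 :: vs'))%N by [].
  have : (v0 == nth v0 (v0 :: vs') i) || (v0 == nth v0 (v0 :: vs') i.+1).
    move: inc' Li; rewrite /incident /links.
    move=> /orP[]/eqP Hv /orP[]/andP[/eqP h1 /eqP h2]; move: Hv; rewrite ?h1 ?h2 => ->; by rewrite eqxx ?orbT.
  have -> : v0 = nth v0 (v0 :: vs') 0 by [].
  rewrite !(nth_uniq v0 H0) // => /orP[/eqP Ei0|//].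
  by move: ne'; rewrite -Ei -Ei0 eqxx.
case: (boolP (w \in v0 :: vs')) => wvs; last first.
  right; exists e', w; split => //=.
  - by move: Hsz => /= [->].
  - by rewrite e'es.
  - by rewrite wvs.
  - by rewrite e'D.
  move=> e1 v1 [|i] Hi /=; first by [].
  exact: (Hl e1 v1 i Hi).
left.
set j := index w (v0 :: vs').
have Hj : (j < size (v0 :: vs'))%N by rewrite index_mem.
have Nj : nth v0 (v0 :: vs') j = w by apply: nth_index.
have j0 : j != 0%N by apply/eqP=> J0; move: Nj; rewrite J0 /= => Ew; move: wv0; rewrite Ew eqxx.
have Hj' : (j <= size (e0 :: es'))%N by rewrite -ltnS -Hsz.
exists (rcons (take j (e0 :: es')) e'), (take j.+1 (v0 :: vs')).
rewrite size_rcons (size_takel Hj') (size_takel Hj); split => //.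
- rewrite rcons_uniq !take_uniq // !andbT.
  by apply/negP=> /mem_take; apply/negP.
- rewrite all_rcons e'D /=. apply/allP=> x /mem_take Hx. by move/allP: HD; apply.
move=> e1 v1 i Hi.
rewrite nth_rcons (size_takel Hj').
have Hi1 : (i < j.+1)%N by [].
rewrite (nth_take _ Hi1).
have Hi' := Hi; rewrite ltnS leq_eqVlt in Hi'.
case/orP: Hi' => [/eqP ij|ij]; last first.
  have ij' : (i < j)%N by [].
  rewrite ij'.
  have Hi2 : (i.+1 < j.+1)%N by [].
  rewrite modn_small // (nth_take _ Hi2) (nth_take _ ij).
  rewrite (set_nth_default e0); last by apply: (leq_trans ij).
  rewrite (set_nth_default v0 v1); last by rewrite Hsz ltnS; apply: ltnW; apply: (leq_trans ij).
  rewrite (set_nth_default v0 v1 (n := i.+1)); last by rewrite Hsz ltnS; apply: (leq_trans ij).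
  by apply: Hl; apply: (leq_trans ij).
rewrite ij ltnn eqxx modnn nth_take // /=.
rewrite (set_nth_default v0 v1) ?Nj //.
Qed.

Lemma cycle_exists : D != set0 -> has_cycle src tgt D.
Proof.
case/set0Pn=> e eD.
suff: forall n es vs, ispath es vs -> (0 < size es)%N ->
   (#|V| - size vs < n)%N -> has_cycle src tgt D.
  apply=> [||]; last first.
  - exact: (ltnSn (#|V| - size [:: src e; tgt e])).
  - exact: (isT : (0 < size [:: e])%N).
  split => //=.
  - by rewrite inE (negbTE (noloop e)).
  - by rewrite eD.
  by move=> e0 v0 [|i] //= _; rewrite /links !eqxx.
elim=> [//|n IH] es vs Hp Hpos Hn.
case: (extend Hp Hpos) => [//|[e' [w Hp']]].
apply: (IH _ _ Hp') => //.
have := Hp' => -[_ _ Hu _ _].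
have := card_uniqP Hu; have := max_card (mem (w :: vs)) => Hc Hs.
rewrite Hs /= in Hc.
move: Hc Hn => /=; lia.
Qed.
End GraphLemma.
Lemma has_cycle_sub (V E : finType) (src tgt : E -> V) (D A : {set E}) :
  D \subset A -> has_cycle src tgt D -> has_cycle src tgt A.
Proof.
move=> sDA [es [vs [H1 H2 H3 H4 H5]]]; exists es, vs; split => //.
by apply/allP=> x /(allP H4); apply: (subsetP sDA).
Qed.

Lemma valid_unique (V E L : finType) (src tgt : E -> V) (nb : V -> 'I_3 -> E)
    (dual : L -> L) (Br : {set L * L * L}) (A : {set E}) (s s' : {ffun E -> L}) :
  trivalent src tgt nb -> involutive dual -> abelian_rules Br ->
  valid tgt dual nb Br s -> valid tgt dual nb Br s' ->
  (forall e, e \notin A -> s e = s' e) -> non_loopy src tgt A -> s = s'.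
Proof.
move=> [noloop injnb incP] invd ab /forallP vs /forallP vs' outA nl.
set D := [set e | s e != s' e].
have vlE v e : (vlabel tgt dual s v e == vlabel tgt dual s' v e) = (s e == s' e).
  rewrite /vlabel; case: (tgt e == v) => //.
  by apply/eqP/eqP => [/(inv_inj invd)|->].
case: (eqVneq D set0) => [D0|Dn].
  apply/ffunP => e; apply/eqP; apply/negPn/negP => ne.
  by have := in_set0 e; rewrite -D0 inE ne.
exfalso; apply: nl; apply: (@has_cycle_sub _ _ _ _ D).
  apply/subsetP => e; rewrite inE; apply: contraR => /outA ->; by rewrite eqxx.
apply: (cycle_exists noloop) => // v e eD /incP [i Ei].
case: (boolP [exists k, (k != i) && (nb v k \in D)]).
  case/existsP => k /andP[ki kD]; exists (nb v k) => //.
  rewrite -Ei (inj_eq (injnb v)) ki /=.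
  by apply/incP; exists k.
rewrite negb_exists => /forallP nD; exfalso.
have eqk : forall k, k != i -> vlabel tgt dual s v (nb v k) = vlabel tgt dual s' v (nb v k).
  move=> k ki; have := nD k; rewrite ki inE /= negbK => /eqP sk; by rewrite /vlabel sk.
have := vs v; have := vs' v.
move: eD; rewrite -Ei inE -(vlE v).
case: i {Ei} eqk nD => [[|[|[|m]]] Hi] // eqk _ /negP ne Hv' Hv; apply: ne;
  have [X1 X2 X3] := ab _ _ _ _ _ _ Hv Hv'.
- have -> : Ordinal Hi = i0 by apply: val_inj.
  by apply/eqP; apply: X3; apply: eqk; apply/eqP => /(congr1 val).
- have -> : Ordinal Hi = i1 by apply: val_inj.
  by apply/eqP; apply: X2; apply: eqk; apply/eqP => /(congr1 val).
- have -> : Ordinal Hi = i2 by apply: val_inj.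
  by apply/eqP; apply: X1; apply: eqk; apply/eqP => /(congr1 val).
Qed.
Local Open Scope ring_scope.
Section Glue.
Variables (E L : finType) (A : {set E}).

Lemma glueA (sA : cfgA L A) (sB : cfgB L A) e (h : e \in A) :
  glue sA sB e = sA (exist _ e h).
Proof.
rewrite /glue ffunE.
have : forall b (p : (e \in A) = b),
  (if b as b' return ((e \in A) = b' -> L) then (fun h => sA (exist _ e h))
   else (fun h => sB (exist _ e (negbT h)))) p = sA (exist _ e h).
  move=> [] p; first by congr (sA _); apply: val_inj.
  by exfalso; move: p; rewrite h.
by apply.
Qed.

Lemma glueB (sA : cfgA L A) (sB : cfgB L A) e (h : e \notin A) :
  glue sA sB e = sB (exist _ e h).
Proof.
rewrite /glue ffunE.
have : forall b (p : (e \in A) = b),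
  (if b as b' return ((e \in A) = b' -> L) then (fun h => sA (exist _ e h))
   else (fun h => sB (exist _ e (negbT h)))) p = sB (exist _ e h).
  move=> [] p; last by congr (sB _); apply: val_inj.
  by exfalso; move: p h; rewrite /= => ->.
by apply.
Qed.

Definition splitc (s : {ffun E -> L}) : cfgA L A * cfgB L A :=
  ([ffun x => s (val x)], [ffun y => s (val y)]).

Lemma glue_bij : bijective (fun p : cfgA L A * cfgB L A => glue p.1 p.2).
Proof.
exists splitc.
  move=> [sA sB]; rewrite /splitc /=; congr (_, _); apply/ffunP => -[e h];
  by rewrite ffunE /= ?(glueA _ _ h) ?(glueB _ _ h).
move=> s; apply/ffunP => e /=.
case: (boolP (e \in A)) => h; [rewrite (glueA _ _ h) | rewrite (glueB _ _ h)];
  by rewrite ffunE.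
Qed.

Lemma glue_injA (sA sA' : cfgA L A) (sB : cfgB L A) :
  glue sA sB = glue sA' sB -> sA = sA'.
Proof.
move=> Eq; apply/ffunP => -[e h].
by rewrite -(glueA sA sB h) -(glueA sA' sB h) Eq.
Qed.

Lemma glue_outA (sA sA' : cfgA L A) (sB : cfgB L A) e :
  e \notin A -> glue sA sB e = glue sA' sB e.
Proof. by move=> h; rewrite !(glueB _ _ h). Qed.
End Glue.
Unset Implicit Arguments.
Theorem mainTheorem1 (V E L : finType) (src tgt : E -> V) (nb : V -> 'I_3 -> E)
    (dual : L -> L) (Br : {set L * L * L}) (C : numClosedFieldType)
    (a : {ffun E -> L} -> C) (A : {set E}) :
  trivalent src tgt nb ->
  involutive dual ->
  abelian_rules Br ->
  (forall s, ~~ valid tgt dual nb Br s -> a s = 0) ->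
  \sum_s `|a s| ^+ 2 = 1 ->
  A != set0 ->
  non_loopy src tgt A ->
  fully_separable (rhoA a A).
Proof.
move=> Htri Hinv Hab Hva Hnorm _ Hnl.
have diag : forall x y, x != y -> rhoA a A x y = 0.
  move=> x y xy; apply: big1 => sB _.
  case: (boolP (valid tgt dual nb Br (glue x sB))) => vx; last by rewrite Hva // mul0r.
  case: (boolP (valid tgt dual nb Br (glue y sB))) => vy; last by rewrite (Hva _ vy) conjC0 mulr0.
  exfalso; move/negP: xy; apply; apply/eqP; apply: (glue_injA (sB:=sB)).
  apply: (valid_unique Htri Hinv Hab vx vy _ Hnl) => e; exact: glue_outA.
have ge0 : forall x, 0 <= rhoA a A x x.
  by move=> x; apply: sumr_ge0 => sB _; apply: mul_conjC_ge0.
have sum1 : \sum_x rhoA a A x x = 1.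
  rewrite -Hnorm (reindex (fun p : cfgA L A * cfgB L A => glue p.1 p.2)) /=;
    last by apply: onW_bij; exact: glue_bij.
  rewrite /rhoA pair_bigA; apply: eq_bigr => p _; by rewrite normCK.
have bij : {on [pred i | true], bijective (@enum_val (cfgA L A) (pred_of_simpl predT))}.
  by apply: onW_bij; exists enum_rank => ?; [exact: enum_valK | exact: enum_rankK].
have prodE : forall x y z : cfgA L A,
  \prod_i ((x i == z i)%:R * ((y i == z i)%:R)^*) = ((x == z) && (y == z))%:R :> C.
  move=> x y z; case: (eqVneq x z) => [->|xz].
    case: (eqVneq y z) => [->|yz].
      by rewrite big1 // => i _; rewrite eqxx conjC1 mulr1.
    have [i ne] : exists i, y i != z i.
      apply/existsP; move: yz; apply: contraR; rewrite negb_exists => /forallP H.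
      by apply/eqP/ffunP => i; apply/eqP; have := H i; rewrite negbK.
    by rewrite (bigD1 i) //= (negbTE ne) conjC0 mulr0 mul0r.
  have [i ne] : exists i, x i != z i.
    apply/existsP; move: xz; apply: contraR; rewrite negb_exists => /forallP H.
    by apply/eqP/ffunP => i; apply/eqP; have := H i; rewrite negbK.
  by rewrite (bigD1 i) //= (negbTE ne) mul0r mul0r.
pose ev := @enum_val (cfgA L A) (pred_of_simpl predT).
exists #|cfgA L A|, (fun k => rhoA a A (ev k) (ev k)),
  (fun k i l => (l == ev k i)%:R); split.
- by move=> k; apply: ge0.
- by rewrite -sum1 [RHS](reindex _ bij).
- move=> k i; rewrite (bigD1 (ev k i)) //= eqxx normr1 expr1n big1 ?addr0 //.
  by move=> l /negbTE ->; rewrite normr0 expr0n.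
move=> x y.
transitivity (\sum_z rhoA a A z z * ((x == z) && (y == z))%:R).
  rewrite (bigD1 x) //= eqxx big1 ?addr0; last first.
    by move=> z /negbTE zx; rewrite eq_sym zx /= mulr0.
  case: (y =P x) => [->|/eqP yx]; first by rewrite /= mulr1.
  by rewrite /= mulr0 diag // eq_sym.
rewrite (reindex _ bij) /=; apply: eq_bigr => k _.
by rewrite prodE.
Qed.
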